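(* Let $G=D_{2n}$ be the dihedral group of order $2n$ with $n$ odd, and let $\mathcal{C}\subseteq G\setminus\{1\}$ be a subset closed under conjugation by $G$ which generates $G$. Then $K_{\mathcal{C}}$ is non-degenerate.
   Context: For a finite group $G$ and a subset $\mathcal{C}\subseteq G\setminus\{1\}$ closed under conjugation, the Killing form $K_{\mathcal{C}}$ is the bilinear form on the complex vector space with basis $\mathcal{C}$ given on basis elements by $K_{\mathcal{C}}(a,b)=|C_G(ab)\cap\mathcal{C}|$; it is non-degenerate if the matrix $(K_{\mathcal{C}}(a,b))_{a,b\in\mathcal{C}}$ is invertible. *)

(* Defs.v *)
From mathcomp Require Import all_boot all_order all_algebra all_fingroup all_solvable all_field.
Set Implicit Arguments. Unset Strict Implicit. Unset Printing Implicit Defensive.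
Local Open Scope ring_scope.

Definition killing_mx (gT : finGroupType) (G : {group gT}) (C : {set gT})
  : 'M[algC]_#|C| :=
  \matrix_(i < #|C|, j < #|C|)
    (#|('C_G[(enum_val i * enum_val j)%g] :&: C)%g|)%:R.

Definition killing_nondegenerate (gT : finGroupType) (G : {group gT})
  (C : {set gT}) : bool := killing_mx G C \in unitmx.

(* Main.v *)
From mathcomp Require Import all_boot all_order all_algebra all_fingroup all_solvable all_field.
From mathcomp Require Import ring zify.
Set Implicit Arguments. Unset Strict Implicit. Unset Printing Implicit Defensive.
Import GRing.Theory Num.Theory.
Local Open Scope ring_scope.
Require Import Defs.
Definition Kf (gT : finGroupType) (C X : {set gT}) (a b : gT) : algC :=
  if (a * b == 1)%g then #|C|%:R
  else if (a \in X) == (b \in X) then #|C :&: X|%:R else 1.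

Lemma alg_part (gT : finGroupType) (C X : {set gT}) (w : gT -> algC) :
  (forall b, b \in C -> (b^-1)%g \in C) ->
  (forall b, ((b^-1)%g \in X) = (b \in X)) ->
  (exists2 t, t \in C & t \notin X) ->
  (forall b, b \in C -> \sum_(a in C) w a * Kf C X a b = 0) ->
  forall a, a \in C -> w a = 0.
Proof.
move=> invC invX [t Ct Xt] hE.
set m := #|C :&: X|; set r := #|C :\: X|.
have rpos : (0 < r)%N by apply/card_gt0P; exists t; rewrite inE Ct Xt.
have cardC : #|C| = (m + r)%N by rewrite /m /r cardsID.
set SQ := \sum_(a in C :&: X) w a; set SR := \sum_(a in C :\: X) w a.
have invC' b : ((b^-1)%g \in C) = (b \in C).
  by apply/idP/idP => [/invC|/invC //]; rewrite invgK.
have Eb b : b \in C -> \sum_(a in C) w a * Kf C X a b =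
   m%:R * (SQ + SR) + r%:R * w (b^-1)%g + (1 - m%:R) * (if b \in X then SR else SQ).
  move=> Cb.
  have -> : \sum_(a in C) w a * Kf C X a b = \sum_(a in C) (w a * m%:R
       + r%:R * (w a * (a == b^-1)%g%:R) + (1 - m%:R) * (w a * ((a \in X) != (b \in X))%:R)).
    apply: eq_bigr => a Ca; rewrite /Kf -eq_invg_mul.
    have -> : (a^-1 == b)%g = (a == b^-1)%g.
      by apply/eqP/eqP => [<-|->]; rewrite invgK.
    case: eqP => [->|_]; first by rewrite invX eqxx cardC natrD /=; ring.
    by case: ((a \in X) == (b \in X)) => /=; ring.
  rewrite !big_split /= -!mulr_sumr -mulr_suml (big_setID X) /= -/SQ -/SR.
  congr (_ + _ * _ + _ * _).
    exact: mulrC.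
    rewrite (bigD1 (b^-1)%g) ?invC //= eqxx mulr1 big1 ?addr0 // => a /andP[_ /negbTE ->].
    by rewrite mulr0.
  rewrite (big_setID X) /=.
  case: (boolP (b \in X)) => Xb.
    rewrite big1 ?add0r; last by move=> a /setIP[_ ->]; rewrite mulr0.
    by apply: eq_bigr => a /setDP[_ /negbTE ->]; rewrite mulr1.
  rewrite addrC big1 ?add0r; last by move=> a /setDP[_ /negbTE ->]; rewrite mulr0.
  by apply: eq_bigr => a /setIP[_ ->]; rewrite mulr1.
have sumR : \sum_(b in C :\: X) w (b^-1)%g = SR.
  rewrite (reindex_inj invg_inj) /=; under eq_bigr => j _ do rewrite invgK.
  apply: eq_bigl => b.
  by rewrite !inE invC' invX.
have sumQ : \sum_(b in C :&: X) w (b^-1)%g = SQ.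
  rewrite (reindex_inj invg_inj) /=; under eq_bigr => j _ do rewrite invgK.
  apply: eq_bigl => b.
  by rewrite !inE invC' invX.
have e1 : \sum_(b in C :\: X) \sum_(a in C) w a * Kf C X a b = 0.
  by apply: big1 => b /setDP[Cb _]; rewrite hE.
have e2 : \sum_(b in C :&: X) \sum_(a in C) w a * Kf C X a b = 0.
  by apply: big1 => b /setIP[Cb _]; rewrite hE.
rewrite (eq_bigr (fun b => m%:R * (SQ + SR) + r%:R * w (b^-1)%g + (1 - m%:R) * SQ)) in e1;
  last by move=> b /setDP[Cb /negbTE Xb]; rewrite Eb // Xb.
rewrite (eq_bigr (fun b => m%:R * (SQ + SR) + r%:R * w (b^-1)%g + (1 - m%:R) * SR)) in e2;
  last by move=> b /setIP[Cb Xb]; rewrite Eb // Xb.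
rewrite !big_split /= !sumr_const -!mulr_sumr sumR sumQ -/m -/r in e1 e2.
clearbody SQ SR m r.
have f1 : r%:R * ((m%:R + 1) * SR + SQ) = 0 :> algC.
  by rewrite -[RHS]e1; ring.
have f2 : m%:R * SR + (m%:R * m%:R + r%:R) * SQ = 0 :> algC.
  by rewrite -[RHS]e2; ring.
have rnz : r%:R != 0 :> algC by rewrite pnatr_eq0 -lt0n.
have g1 : SQ = - ((m%:R + 1) * SR).
  by apply/eqP; rewrite -addr_eq0 addrC; move: f1 => /eqP; rewrite mulf_eq0 (negbTE rnz).
have k0 : (0 < (m * m + r) * (m + 1) - m)%N by nia.
have g2 : SR * (((m * m + r) * (m + 1) - m)%:R) = 0.
  rewrite natrB; last by nia.
  by rewrite -oppr0 -[in RHS]f2 g1 !(natrD, natrM); ring.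
have SR0 : SR = 0.
  by move/eqP: g2; rewrite mulf_eq0 pnatr_eq0 (gtn_eqF k0) orbF => /eqP.
have SQ0 : SQ = 0 by rewrite g1 SR0 mulr0 oppr0.
move=> a Ca.
have := hE _ (invC _ Ca); rewrite Eb ?invC // SR0 SQ0 invgK if_same !mulr0 !addr0 ?add0r.
by rewrite mulr0 add0r => /eqP; rewrite mulf_eq0 (negbTE rnz) => /eqP.
Qed.
Section Grp.
Local Open Scope group_scope.
Variables (gT : finGroupType) (G X : {group gT}) (y : gT).
Hypotheses (sXG : X \subset G) (Gy : y \in G) (y2 : y * y = 1)
  (yinv : forall a, a \in X -> a ^ y = a^-1) (abX : abelian X) (oddX : odd #|X|)
  (cov : forall g, g \in G -> g \notin X -> exists2 a, a \in X & g = a * y).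

Lemma yV : y^-1 = y.
Proof. by apply/eqP; rewrite eq_invg_mul y2. Qed.

Lemma odd_inv1 a : a \in X -> a^-1 = a -> a = 1.
Proof.
move=> Xa aV; apply/eqP; rewrite -order_eq1.
have h1 : (#[a] %| #|X|)%N by apply: order_dvdG.
have h2 : (#[a] %| 2)%N by rewrite order_dvdn expgS expg1 -{1}aV mulVg.
have : (#[a] %| gcdn 2 #|X|)%N by rewrite dvdn_gcd h1 h2.
have -> : gcdn 2 #|X| = 1%N.
  apply/eqP; rewrite -/(coprime 2 #|X|) prime_coprime // dvdn2 oddX //.
by rewrite dvdn1.
Qed.

Lemma Xcomm a b : a \in X -> b \in X -> a * b = b * a.
Proof. by move=> Xa Xb; apply: (centsP abX). Qed.

Lemma out_facts g : g \in G -> g \notin X ->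
  g * g = 1 /\ forall b, b \in X -> b ^ g = b^-1.
Proof.
move=> Gg nXg; have [a Xa ->] := cov Gg nXg; split.
  have e : y * a * y = a^-1 by rewrite -yinv // conjgE yV mulgA.
  by rewrite -mulgA (mulgA y) e mulgV.
by move=> b Xb; rewrite conjgM [b ^ a]conjgE (Xcomm Xb Xa) mulKg yinv.
Qed.

Lemma out_sq g : g \in G -> g \notin X -> g^-1 = g.
Proof. by move=> Gg nXg; apply/eqP; rewrite eq_invg_mul; case: (out_facts Gg nXg) => ->. Qed.

Lemma mul_out g h : g \in G -> g \notin X -> h \in G -> h \notin X -> g * h \in X.
Proof.
move=> Gg nXg Gh nXh; have [a Xa ->] := cov Gg nXg; have [b Xb ->] := cov Gh nXh.
have e : y * b * y = b^-1 by rewrite -yinv // conjgE yV mulgA.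
by rewrite -mulgA (mulgA y) e groupM ?groupV.
Qed.

Lemma mulX_out a g : a \in X -> g \notin X -> a * g \notin X.
Proof. by move=> Xa; apply: contra; rewrite groupMl. Qed.

Lemma mul_outX g a : a \in X -> g \notin X -> g * a \notin X.
Proof. by move=> Xa; apply: contra; rewrite groupMr. Qed.

Lemma cent_in c : c \in X -> c != 1 -> 'C_G[c] = X.
Proof.
move=> Xc c1; apply/setP => g; rewrite inE cent1E.
case: (boolP (g \in X)) => Xg.
  by rewrite (subsetP sXG) //= (Xcomm Xg Xc) eqxx.
case: (boolP (g \in G)) => //= Gg; apply/negbTE; apply: contra c1 => /eqP e.
have [_ h] := out_facts Gg Xg.
apply/eqP/odd_inv1 => //; rewrite -h // conjgE -e mulKg //.
Qed.

Lemma cent_out c : c \in G -> c \notin X -> 'C_G[c] = [set 1; c].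
Proof.
move=> Gc nXc; apply/setP => g; rewrite in_setI cent1E !inE.
case: (boolP (g \in X)) => Xg.
  rewrite (subsetP sXG) //=.
  have [_ h] := out_facts Gc nXc.
  apply/idP/idP => [/eqP e | /orP[/eqP -> | /eqP e]].
  - apply/orP; left; apply/eqP/odd_inv1 => //; rewrite -h // conjgE e mulKg //.
  - by rewrite mul1g mulg1.
  - by move: nXc; rewrite -e Xg.
case: (boolP (g \in G)) => /= Gg; last first.
  by apply/esym/negbTE; apply: contra Gg => /orP[/eqP->|/eqP->] //; exact: group1.
apply/idP/idP => [/eqP e | /orP[/eqP -> | /eqP ->]]; last 2 first.
- by rewrite mul1g mulg1.
- by [].
have Xgc := mul_out Gg Xg Gc nXc.
have [_ h] := out_facts Gc nXc.
have : (g * c) ^ c = g * c by rewrite conjgE e mulgA mulKg.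
rewrite h // => /(odd_inv1 Xgc) gc1.
have -> : g = c^-1 by rewrite -(mulgK c g) gc1 mul1g.
by rewrite (out_sq Gc nXc) eqxx orbT.
Qed.

Variable C : {set gT}.
Hypotheses (sC : C \subset G :\ 1) (cC : forall x g, x \in C -> g \in G -> x ^ g \in C)
  (t : gT) (Ct : t \in C) (nXt : t \notin X).

Lemma sCG : C \subset G.
Proof. exact: subset_trans sC (subD1set _ _). Qed.

Lemma C1 : 1 \notin C.
Proof. by apply/negP => /(subsetP sC); rewrite !inE eqxx. Qed.

Lemma Gt : t \in G.
Proof. exact: (subsetP sCG). Qed.

Lemma out_inC u : u \in G -> u \notin X -> u \in C.
Proof.
move=> Gu nXu; have Xb := mul_out Gu nXu Gt nXt.
set b := u * t in Xb.
have [_ h] := out_facts Gt nXt.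
have key a : a \in X -> t ^ a = a^-1 * a^-1 * t.
  move=> Xa; rewrite conjgE -mulgA; congr (_ * _).
  have := h _ (groupVr Xa); rewrite conjgE invgK (out_sq Gt nXt) => e.
  have [tt _] := out_facts Gt nXt.
  by rewrite -{1}e mulgA tt mul1g.
pose a := (b^-1) ^+ (#|X|.+1./2).
have Xa : a \in X by rewrite groupX ?groupV.
have aa : a * a = b^-1.
  rewrite -expgD addnn.
  have -> : (#|X|.+1./2).*2 = #|X|.+1.
    by have := odd_double_half #|X|.+1; rewrite /= oddX /= add0n.
  by rewrite expgSr expg_cardG ?groupV // mul1g.
have -> : u = t ^ a.
  rewrite key // -invgM aa invgK /b -mulgA.
  by have := out_facts Gt nXt => -[-> _]; rewrite mulg1.
by apply: cC => //; apply: (subsetP sXG).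
Qed.

Lemma invC b : b \in C -> b^-1 \in C.
Proof.
move=> Cb; have Gb : b \in G by apply: (subsetP sCG).
case: (boolP (b \in X)) => Xb; last by rewrite out_sq.
have [_ h] := out_facts Gt nXt.
by rewrite -h //; apply: cC => //; apply: Gt.
Qed.

Lemma Kval a b : a \in C -> b \in C ->
  #|'C_G[a * b] :&: C| =
   if a * b == 1 then #|C| else if (a \in X) == (b \in X) then #|C :&: X| else 1%N.
Proof.
move=> Ca Cb; have Ga : a \in G by apply: (subsetP sCG).
have Gb : b \in G by apply: (subsetP sCG).
case: eqP => [-> | /eqP ab1].
  by rewrite cent11T setIT (setIidPr sCG).
case: (boolP (a \in X)) => Xa; case: (boolP (b \in X)) => Xb /=.
- by rewrite cent_in ?groupM // setIC.
- rewrite cent_out; last (by exact: mulX_out); last by rewrite groupM.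
  have Cab : a * b \in C by apply: out_inC; [rewrite groupM | exact: mulX_out].
  rewrite (_ : _ :&: _ = [set a * b]) ?cards1 //.
  apply/setP => g; rewrite !inE.
  case: (g =P a * b) => [-> | _]; first by rewrite orbT Cab.
  by rewrite orbF andbC; case: (g =P 1) => [-> | _]; rewrite ?(negbTE C1) ?andbF.
- rewrite cent_out; last (by exact: mul_outX); last by rewrite groupM.
  have Cab : a * b \in C by apply: out_inC; [rewrite groupM | exact: mul_outX].
  rewrite (_ : _ :&: _ = [set a * b]) ?cards1 //.
  apply/setP => g; rewrite !inE.
  case: (g =P a * b) => [-> | _]; first by rewrite orbT Cab.
  by rewrite orbF andbC; case: (g =P 1) => [-> | _]; rewrite ?(negbTE C1) ?andbF.
- by rewrite cent_in ?mul_out // setIC.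
Qed.

End Grp.

Lemma KfE (gT : finGroupType) (C X : {set gT}) a b :
  Kf C X a b = (if (a * b == 1)%g then #|C| else if (a \in X) == (b \in X) then #|C :&: X| else 1%N)%:R.
Proof. by rewrite /Kf; case: ifP => //; case: ifP. Qed.

Local Close Scope ring_scope.
Theorem theorem9p1 (gT : finGroupType) (G : {group gT}) (n : nat) (C : {set gT}) :
  (1 < n)%N -> odd n ->
  G \isog 'D_(n.*2) ->
  (C \subset G :\ 1%g) ->
  (forall x g, x \in C -> g \in G -> (x ^ g)%g \in C) ->
  <<C>>%g = G :> {set gT} ->
  killing_nondegenerate G C.
Proof.
Local Open Scope group_scope.
move=> n1 oddn iso sC cC genC.
case/(isoGrpP G (Grp_dihedral n1)): iso => oG homG.
rewrite card_dihedral // in oG.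
case/existsP: homG => -[x y] /eqP [defG xn y2' xy].
pose X := <[x]>%G.
have sXG : X \subset G by rewrite -defG joing_subl.
have Gy : y \in G by rewrite -defG (subsetP (joing_subr _ _)) // cycle_id.
have y2 : (y * y = 1)%g by rewrite -y2' expgS expg1.
have yinv a : a \in X -> (a ^ y = a^-1)%g.
  by case/cycleP => i ->; rewrite conjXg xy expVgn.
have abX : abelian X := cycle_abelian x.
have oX : (#[x]%g %| n)%N by rewrite order_dvdn xn.
have oddX : odd #|X| by rewrite -orderE (dvdn_odd oX).
have cov g : g \in G -> g \notin X -> exists2 a, a \in X & g = (a * y)%g.
  have nXy : <[y]> \subset 'N(X).
    by rewrite cycle_subG; apply/normP; rewrite -cycleJ xy cycleV.
  rewrite -defG norm_joinEr // => /mulsgP[a yk Xa /cycleP[k ->] ->] nXg.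
  rewrite -(expg_mod k y2') in nXg *.
  have : (k %% 2 < 2)%N by rewrite ltn_mod.
  case: (k %% 2) nXg => [|[|//]] nXg _.
    by rewrite expg0 mulg1 Xa in nXg.
  by exists a; rewrite ?expg1.
have [t Ct nXt] : exists2 t, t \in C & t \notin X.
  apply/subsetPn/negP => sCX.
  have : G \subset X by rewrite -genC gen_subG.
  move/subset_leq_card; rewrite oG /= -orderE.
  have := dvdn_leq (ltnW n1) oX.
  rewrite -addnn; lia.
rewrite /killing_nondegenerate unitmxE unitfE.
apply/negP => /det0P [v vnz vK].
case/eqP: vnz.
pose w g := v ord0 (enum_rank_in Ct g).
have hE b : b \in C -> (\sum_(a in C) w a * Kf C X a b = 0)%R.
  move=> Cb.
  have hb : (\sum_i v ord0 i * killing_mx G C i (enum_rank_in Ct b) = 0)%R.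
    by have := congr1 (fun M : 'rV[algC]_#|C| => M ord0 (enum_rank_in Ct b)) vK; rewrite !mxE.
  rewrite -[RHS]hb [LHS]big_enum_val /=; apply: eq_bigr => i _.
  rewrite /w enum_valK_in mxE enum_rankK_in // KfE.
  by rewrite (Kval sXG y2 yinv abX oddX cov sC cC Ct nXt (enum_valP i) Cb).
have invX b : ((b^-1)%g \in X) = (b \in X) by rewrite groupV.
have w0 := alg_part (invC y2 yinv abX cov sC cC Ct nXt) invX (ex_intro2 _ _ t Ct nXt) hE.
apply/rowP => i; rewrite mxE.
by have := w0 _ (enum_valP i); rewrite /w enum_valK_in.
Qed.
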